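(* Let $m\ge 2$ and let $B$ be a blocker in $CK(2m)$. Then the boundary edges belonging to $B$ are all contained in some set of $m$ consecutive boundary edges $\{[s,s+1],[s+1,s+2],\dots,[s+m-1,s+m]\}$ (labels modulo $2m$).
   Context: $CK(2m)$ denotes the complete convex geometric graph whose vertices are the $2m$ vertices of a convex polygon, labelled cyclically $0,1,\dots,2m-1$ (labels modulo $2m$), and whose edges are all straight segments between pairs of vertices. Two edges with four distinct endpoints cross iff their endpoints alternate in the cyclic order. A simple perfect matching (SPM) is a set of $m$ edges that are pairwise disjoint (no common endpoint and no crossing). A blocking set is a set of edges containing at least one edge of every SPM. A blocker is a blocking set with exactly $m$ edges. Boundary edges are the edges $[i,i+1]$. *)

(* Defs.v *)
From mathcomp Require Import all_boot.
Set Implicit Arguments. Unset Strict Implicit. Unset Printing Implicit Defensive.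

(* Vertices of CK(n): 'I_n, labelled 0..n-1 cyclically (n = 2m).
   An edge is a 2-element subset of the vertex set. *)
Definition is_edge (n : nat) (e : {set 'I_n}) : bool := #|e| == 2.

(* Two edges cross iff they have four distinct endpoints that alternate in
   the cyclic order; with labels a < b, c < d this means a < c < b < d
   or c < a < d < b. *)
Definition cross (n : nat) (e f : {set 'I_n}) : bool :=
  [exists a : 'I_n, exists b : 'I_n, exists c : 'I_n, exists d : 'I_n,
    [&& e == [set a; b], f == [set c; d] &
        (((a < c) && (c < b) && (b < d)) || ((c < a) && (a < d) && (d < b)))%N]].

Definition edges_disjoint (n : nat) (e f : {set 'I_n}) : bool :=
  [disjoint e & f] && ~~ cross e f.

Definition is_SPM (m : nat) (M : {set {set 'I_(2 * m)}}) : bool :=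
  [&& [forall e in M, is_edge e], #|M| == m &
      [forall e in M, forall f in M, (e != f) ==> edges_disjoint e f]].

Definition is_blocking (m : nat) (B : {set {set 'I_(2 * m)}}) : Prop :=
  (forall e, e \in B -> is_edge e) /\
  (forall M, is_SPM M -> exists2 e, e \in B & e \in M).

Definition is_blocker (m : nat) (B : {set {set 'I_(2 * m)}}) : Prop :=
  is_blocking B /\ #|B| = m.

Definition bnd_edge (n : nat) (i : 'I_n) : {set 'I_n} :=
  [set x : 'I_n | (val x == val i) || (val x == (val i).+1 %% n)].

(* Main.v *)
From Stdlib Require Import Lia.
Require Import Defs.
From mathcomp Require Import all_boot.
Set Implicit Arguments. Unset Strict Implicit. Unset Printing Implicit Defensive.

Lemma nleP a b : ~ is_true (a <= b) -> ~ (a <= b)%coq_nat.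
Proof. by move=> h /leP. Qed.
Lemma leF a b : (a <= b) = false -> ~ (a <= b)%coq_nat.
Proof. by move=> h /leP; rewrite h. Qed.
Lemma nleb a b : is_true (~~ (a <= b)) -> ~ (a <= b)%coq_nat.
Proof. by move=> /negP h /leP. Qed.

Ltac tolia := repeat match goal with
 | H : is_true (_ <= _) |- _ => move/leP: H => H
 | H : (_ <= _) = false |- _ => move/leF: H => H
 | H : is_true (~~ (_ <= _)) |- _ => move/nleb: H => H
 | H : ~ is_true (_ <= _) |- _ => move/nleP: H => H
 | H : is_true (_ == _) |- _ => move/eqP: H => H
 | |- is_true (_ <= _) => apply/leP
 | |- is_true (_ == _) => apply/eqP
 end; change addn with Nat.add in *; change subn with Nat.sub in *; change muln with Nat.mul in *.

Lemma modn_small2 x d : x < 2 * d -> (x < d /\ x %% d = x) \/ (d <= x /\ x %% d = x - d).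
Proof.
move=> h; case: (ltnP x d) => h1; first by left; rewrite modn_small.
right; split => //.
have -> : x = (x - d) + d by rewrite subnK.
rewrite modnDr modn_small; first by rewrite addnK.
by tolia; lia.
Qed.

Lemma set2_eq (T : finType) (a b c d : T) :
  [set a; b] = [set c; d] -> (a = c /\ b = d) \/ (a = d /\ b = c).
Proof.
move=> E.
have ha : a \in [set c; d] by rewrite -E set21.
have hb : b \in [set c; d] by rewrite -E set22.
have hc : c \in [set a; b] by rewrite E set21.
have hd : d \in [set a; b] by rewrite E set22.
move: ha hb hc hd; rewrite !in_set2.
by do 4 (case/orP => /eqP ?); subst; auto.
Qed.

Section Main.
Variable m : nat.
Hypothesis m2 : 2 <= m.
Local Notation n := (2 * m).

Lemma npos : 0 < n.
Proof. by rewrite muln_gt0 /=; apply: leq_trans m2. Qed.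

Definition vtx (k : nat) : 'I_n := Ordinal (ltn_pmod k npos).

Lemma val_vtx k : val (vtx k) = k %% n. Proof. by []. Qed.

Lemma vtx_eqE x y : (vtx x == vtx y) = (x == y %[mod n]).
Proof. by []. Qed.

Lemma vtx_mod x y : x %% n = y %% n -> vtx x = vtx y.
Proof. by move=> h; apply/eqP; rewrite vtx_eqE h. Qed.

Lemma off_eq o Y z : z < n -> vtx (o + Y) = vtx (o + z) -> Y %% n = z.
Proof. by move=> hz /eqP; rewrite vtx_eqE eqn_modDl (modn_small hz) => /eqP. Qed.

Lemma vinj o x y : x < n -> y < n -> vtx (o + x) = vtx (o + y) -> x = y.
Proof. by move=> hx hy /(off_eq hy); rewrite modn_small. Qed.

Lemma vtx_surj o (x : 'I_n) : exists2 u, u < n & x = vtx (o + u).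
Proof.
exists ((x + (n - o %% n)) %% n); first by rewrite ltn_pmod // npos.
apply: val_inj; rewrite /= modnDmr -modnDml.
have ho : o %% n < n by rewrite ltn_pmod // npos.
have -> : o %% n + (x + (n - o %% n)) = x + n by tolia; lia.
by rewrite modnDr modn_small.
Qed.

Definition in_cls t (e : {set 'I_n}) :=
  exists x y, e = [set vtx x; vtx y] /\ (x + y) %% n = t %% n.

Lemma cls_unique t t' e : in_cls t e -> in_cls t' e -> t %% n = t' %% n.
Proof.
move=> [x [y [-> h1]]] [x' [y' [/set2_eq E h2]]].
rewrite -h1 -h2.
case: E => [[/eqP e1 /eqP e2]|[/eqP e1 /eqP e2]]; move: e1 e2; rewrite !vtx_eqE => /eqP e1 /eqP e2.
  by rewrite -modnDm e1 e2 modnDm.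
by rewrite -modnDm e1 e2 modnDm addnC.
Qed.

Lemma in_cls_mod t t' e : in_cls t e -> t %% n = t' %% n -> in_cls t' e.
Proof. by move=> [x [y [h1 h2]]] h; exists x, y; rewrite h2 h. Qed.

Variable o : nat.
Variable pi : nat -> nat.
Hypothesis pi_lt : forall u, u < n -> pi u < n.
Hypothesis pi_ne : forall u, u < n -> pi u <> u.
Hypothesis pi_inv : forall u, u < n -> pi (pi u) = u.
Hypothesis pi_lam : forall u v, u < n -> v < n ->
  ~ ((u < v)%coq_nat /\ (v < pi u)%coq_nat /\ (pi u < pi v)%coq_nat).

Definition ch u : {set 'I_n} := [set vtx (o + u); vtx (o + pi u)].
Definition Mset : {set {set 'I_n}} := [set ch (val u) | u : 'I_n].

Lemma ch_pi u : u < n -> ch (pi u) = ch u.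
Proof. by move=> hu; rewrite /ch pi_inv // setUC. Qed.

Lemma ch_card u : u < n -> #|ch u| = 2.
Proof.
move=> hu; rewrite cards2; case: eqP => // /(vinj hu (pi_lt hu)) h.
by case: (pi_ne hu).
Qed.

Lemma ch_disj u v : u < n -> v < n -> ch u != ch v -> [disjoint ch u & ch v].
Proof.
move=> hu hv hne; apply/pred0P => x /=; apply/negP => /andP [].
have hpu := pi_lt hu; have hpv := pi_lt hv.
rewrite !in_set2 => /orP [] /eqP -> /orP [] /eqP.
- by move/(vinj hu hv) => h; move: hne; rewrite h eqxx.
- by move/(vinj hu hpv) => h; move: hne; rewrite h ch_pi // eqxx.
- by move/(vinj hpu hv) => h; move: hne; rewrite -h ch_pi // eqxx.
- move/(vinj hpu hpv) => h; move: hne.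
  by rewrite -(ch_pi hu) -(ch_pi hv) h eqxx.
Qed.

Lemma ch_pair u a b : u < n -> ch u = [set a; b] -> exists x1 x2,
  [/\ x1 < n, x2 < n, pi x1 = x2, pi x2 = x1 & a = vtx (o + x1) /\ b = vtx (o + x2)].
Proof.
move=> hu /set2_eq [[<- <-]|[<- <-]].
  by exists u, (pi u); split => //; [apply: pi_lt | apply: pi_inv].
by exists (pi u), u; split => //; [apply: pi_lt | apply: pi_inv].
Qed.

Lemma rot4 x1 y1 x2 y2 : x1 < n -> y1 < n -> x2 < n -> y2 < n ->
  (o + x1) %% n < (o + y1) %% n -> (o + y1) %% n < (o + x2) %% n ->
  (o + x2) %% n < (o + y2) %% n ->
  ((x1 < y1)%coq_nat /\ (y1 < x2)%coq_nat /\ (x2 < y2)%coq_nat) \/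
  ((y1 < x2)%coq_nat /\ (x2 < y2)%coq_nat /\ (y2 < x1)%coq_nat) \/
  ((x2 < y2)%coq_nat /\ (y2 < x1)%coq_nat /\ (x1 < y1)%coq_nat) \/
  ((y2 < x1)%coq_nat /\ (x1 < y1)%coq_nat /\ (y1 < x2)%coq_nat).
Proof.
have ho : o %% n < n by rewrite ltn_pmod // npos.
rewrite -!(modnDml o).
move=> h1 h2 h3 h4.
have k1 : o %% n + x1 < 2 * n by tolia; lia.
have k2 : o %% n + y1 < 2 * n by tolia; lia.
have k3 : o %% n + x2 < 2 * n by tolia; lia.
have k4 : o %% n + y2 < 2 * n by tolia; lia.
case: (modn_small2 k1) => [[? ->]|[? ->]];
case: (modn_small2 k2) => [[? ->]|[? ->]];
case: (modn_small2 k3) => [[? ->]|[? ->]];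
case: (modn_small2 k4) => [[? ->]|[? ->]]; move=> *; tolia; lia.
Qed.

Lemma alt_false x1 y1 x2 y2 : x1 < n -> y1 < n -> x2 < n -> y2 < n ->
  pi x1 = x2 -> pi x2 = x1 -> pi y1 = y2 -> pi y2 = y1 ->
  (o + x1) %% n < (o + y1) %% n -> (o + y1) %% n < (o + x2) %% n ->
  (o + x2) %% n < (o + y2) %% n -> False.
Proof.
move=> h1 h2 h3 h4 e1 e2 e3 e4 a1 a2 a3.
have L1 := pi_lam h1 h2; have L2 := pi_lam h2 h3; have L3 := pi_lam h3 h4;
have L4 := pi_lam h4 h1.
rewrite e1 e2 e3 e4 in L1 L2 L3 L4.
case: (rot4 h1 h2 h3 h4 a1 a2 a3); lia.
Qed.

Lemma ch_nocross u v : u < n -> v < n -> ~~ cross (ch u) (ch v).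
Proof.
move=> hu hv; apply/negP.
case/existsP => a /existsP [b /existsP [c /existsP [d /and3P [/eqP E1 /eqP E2 H]]]].
have [x1 [x2 [k1 k2 p1 p2 [ea eb]]]] := ch_pair hu E1.
have [y1 [y2 [l1 l2 q1 q2 [ec ed]]]] := ch_pair hv E2.
subst a b c d; rewrite !val_vtx in H.
case/orP: H => /andP [/andP [H1 H2] H3].
  exact: (alt_false k1 l1 k2 l2 p1 p2 q1 q2 H1 H2 H3).
exact: (alt_false l1 k1 l2 k2 q1 q2 p1 p2 H1 H2 H3).
Qed.

Lemma Mset_mem e : e \in Mset -> exists2 u, u < n & e = ch u.
Proof. case/imsetP => u _ ->. exists (val u) => //; exact: ltn_ord. Qed.

Lemma Mset_SPM : is_SPM Mset.
Proof.
have tI : trivIset Mset.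
  apply/trivIsetP => e f /Mset_mem [u hu ->] /Mset_mem [v hv ->].
  exact: ch_disj.
have cov : cover Mset = setT.
  apply/setP => x; rewrite inE; apply/bigcupP.
  have [u hu ->] := vtx_surj o x.
  exists (ch u); last by rewrite set21.
  by apply/imsetP; exists (Ordinal hu).
have hcard : #|Mset| = m.
  move/eqP: tI; rewrite cov cardsT card_ord.
  rewrite (eq_bigr (fun _ => 2)); last by move=> e /Mset_mem [u hu ->]; apply: ch_card.
  rewrite sum_nat_const => h; tolia; lia.
apply/and3P; split.
- by apply/forallP => e; apply/implyP => /Mset_mem [u hu ->]; rewrite /is_edge ch_card.
- by rewrite hcard.
apply/forallP => e; apply/implyP => /Mset_mem [u hu ->].
apply/forallP => f; apply/implyP => /Mset_mem [v hv ->].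
apply/implyP => hne; apply/andP; split; first exact: ch_disj.
exact: ch_nocross.
Qed.

End Main.

Section Blk.
Variable m : nat.
Hypothesis m2 : 2 <= m.
Local Notation n := (2 * m).
Variable B : {set {set 'I_n}}.
Hypothesis HB : is_blocker B.
Local Notation vtx := (vtx m2).
Local Notation in_cls := (in_cls m2).

Definition pi1 u := n - 1 - u.

Lemma pi1_SPM o : is_SPM (Mset m2 o pi1).
Proof.
have nn := npos m2.
apply: Mset_SPM; rewrite /pi1 => *; tolia; lia.
Qed.

Lemma Mset_cls o pi e : e \in Mset m2 o pi ->
  exists2 u, u < n & in_cls (o + u + (o + pi u)) e.
Proof. case/imsetP => u _ ->; exists (val u); first exact: ltn_ord. by exists (o + u), (o + pi u). Qed.

Definition g i := odflt set0 [pick e in B :&: Mset m2 i.+1 pi1].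

Lemma g_spec i : i < m -> g i \in B /\ in_cls (2 * i + 1) (g i).
Proof.
move=> hi; rewrite /g; case: pickP => [e|none] /=.
  rewrite inE => /andP [eB eM]; split => //.
  have [u hu hc] := Mset_cls eM.
  apply: (in_cls_mod hc); rewrite /pi1.
  have -> : i.+1 + u + (i.+1 + (n - 1 - u)) = 2 * i + 1 + n by tolia; lia.
  by rewrite modnDr.
exfalso; have [e eB eM] := HB.1.2 _ (pi1_SPM i.+1).
by move: (none e); rewrite inE eB eM.
Qed.

Lemma g_inj i j : i < m -> j < m -> g i = g j -> i = j.
Proof.
move=> hi hj e.
have [_ c1] := g_spec hi; have [_ c2] := g_spec hj.
rewrite e in c1; have := cls_unique c1 c2.
by rewrite !modn_small; tolia; lia.
Qed.

Lemma B_cover e : e \in B -> exists2 i, i < m & e = g i.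
Proof.
move=> eB.
pose G := [set g (val i) | i : 'I_m].
have GB : G \subset B by apply/subsetP => x /imsetP [i _ ->]; exact: (g_spec (ltn_ord i)).1.
have cG : #|G| = m.
  rewrite card_imset ?card_ord // => i j ee; apply: val_inj; exact: (g_inj (ltn_ord i) (ltn_ord j) ee).
have : G == B by (rewrite eqEcard GB cG; case: HB => _ ->; rewrite leqnn).
move/eqP => EG; move: eB; rewrite -EG /G.
move=> /imsetP [i _ ->].
by exists (val i); first exact: ltn_ord.
Qed.

Lemma B_uniq t e e' : e \in B -> e' \in B -> in_cls t e -> in_cls t e' -> e = e'.
Proof.
move=> /B_cover [i hi ->] /B_cover [j hj ->] c1 c2.
have [_ d1] := g_spec hi; have [_ d2] := g_spec hj.
have h := cls_unique d1 c1; have h' := cls_unique d2 c2.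
rewrite -h' in h; move: h; rewrite !modn_small; try (tolia; lia).
by move=> h; have -> : i = j by tolia; lia.
Qed.

Definition bnd x : {set 'I_n} := [set vtx x; vtx x.+1].

Lemma bnd_cls x : in_cls (2 * x + 1) (bnd x).
Proof. exists x, x.+1; split => //; have -> : x + x.+1 = 2 * x + 1 by tolia; lia. by []. Qed.

Lemma bnd_mod x y : x %% n = y %% n -> bnd x = bnd y.
Proof.
move=> h; rewrite /bnd (vtx_mod m2 h); congr [set _; _]; apply: vtx_mod.
by rewrite -addn1 -modnDml h modnDml addn1.
Qed.

Lemma bnd_edgeE (i : 'I_n) : bnd_edge i = bnd i.
Proof.
apply/setP => x; rewrite /bnd_edge /bnd inE in_set2.
by rewrite -!val_eqE /= (modn_small (ltn_ord i)).
Qed.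

Lemma no_antipode x : bnd x \in B -> bnd (x + m) \in B -> False.
Proof.
move=> h1 h2.
have c2 : in_cls (2 * x + 1) (bnd (x + m)).
  apply: (in_cls_mod (bnd_cls _)).
  have -> : 2 * (x + m) + 1 = 2 * x + 1 + n by tolia; lia.
  by rewrite modnDr.
have E := B_uniq h1 h2 (bnd_cls x) c2.
have : vtx x \in bnd (x + m) by rewrite -E set21.
have n0 := npos m2.
have m2l : (2 <= m)%coq_nat by apply/leP.
case/set2P => h.
  have := @off_eq m m2 x m 0 n0; rewrite addn0 -h => /(_ erefl).
  rewrite modn_small => *; tolia; lia.
have := @off_eq m m2 x m.+1 0 n0; rewrite addn0 addnS -h => /(_ erefl).
rewrite modn_small => *; tolia; lia.
Qed.


Lemma hit_contra o pi u X Y : u < n -> pi u < n -> bnd X \in B -> ch m2 o pi u \in B ->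
  2 * X + 1 = o + u + (o + pi u) + n -> X = o + Y ->
  Y %% n <> u -> Y %% n <> pi u -> False.
Proof.
move=> hu hpu bX eB hs hX h1 h2.
have c : in_cls (o + u + (o + pi u)) (bnd X).
  by apply: (in_cls_mod (bnd_cls X)); rewrite hs modnDr.
have c' : in_cls (o + u + (o + pi u)) (ch m2 o pi u) by exists (o + u), (o + pi u).
have E := B_uniq bX eB c c'.
have : vtx X \in ch m2 o pi u by rewrite -E set21.
rewrite in_set2 hX => /orP [] /eqP h.
  by apply: h1; apply: off_eq h.
by apply: h2; apply: off_eq h.
Qed.

Definition pi3 ka kb u :=
  if u < 2 * ka then 2 * ka - 1 - u
  else if u < 2 * ka + 2 * kb then 4 * ka + 2 * kb - 1 - u
  else n + 2 * ka + 2 * kb - 1 - u.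

Lemma pi3_spec ka kb u :
  ((u < 2 * ka)%coq_nat /\ pi3 ka kb u = 2 * ka - 1 - u) \/
  ((2 * ka <= u)%coq_nat /\ (u < 2 * ka + 2 * kb)%coq_nat /\ pi3 ka kb u = 4 * ka + 2 * kb - 1 - u) \/
  ((2 * ka + 2 * kb <= u)%coq_nat /\ pi3 ka kb u = n + 2 * ka + 2 * kb - 1 - u).
Proof. rewrite /pi3; case: ifP => h1; [|case: ifP => h2]; tolia; lia. Qed.

Lemma core3 ka kb kc o : 0 < ka -> 0 < kb -> 0 < kc -> ka + kb + kc = m ->
  bnd (o + ka - 1 + m) \in B -> bnd (o + 2 * ka + kb - 1 + m) \in B ->
  bnd (o + 2 * ka + 2 * kb + kc - 1 + m) \in B -> False.
Proof.
move=> h1 h2 h3 hs bA bB bC.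
have nn := npos m2.
have m2l : (2 <= m)%coq_nat by apply/leP.
have SP : is_SPM (Mset m2 o (pi3 ka kb)).
  apply: Mset_SPM.
  - move=> u hu; have := pi3_spec ka kb u => sp; tolia; lia.
  - move=> u hu; have := pi3_spec ka kb u => sp; tolia; lia.
  - move=> u hu; have := pi3_spec ka kb u => sp; have := pi3_spec ka kb (pi3 ka kb u) => sp'; tolia; lia.
  - move=> u v hu hv; have := pi3_spec ka kb u => sp; have := pi3_spec ka kb v => sp'; tolia; lia.
case: HB => [[_ Hb] _].
have [e eB /imsetP [uu _ Ee]] := Hb _ SP.
subst e; set u := val uu in eB.
have hu : u < n := ltn_ord uu.
have hpu : pi3 ka kb u < n by have := pi3_spec ka kb u => sp; tolia; lia.
have := pi3_spec ka kb u; case=> [[r1 r2]|[[r1 [r2 r3]]|[r1 r2]]].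
- apply: (hit_contra (X := o + ka - 1 + m) (Y := ka - 1 + m) hu hpu bA eB); rewrite ?r2.
  + tolia; lia.
  + tolia; lia.
  + rewrite modn_small; tolia; lia.
  + rewrite modn_small; tolia; lia.
- apply: (hit_contra (X := o + 2 * ka + kb - 1 + m) (Y := 2 * ka + kb - 1 + m) hu hpu bB eB); rewrite ?r3.
  + tolia; lia.
  + tolia; lia.
  + have : 2 * ka + kb - 1 + m < 2 * n by tolia; lia.
    by case/modn_small2 => [[? ->]|[? ->]]; tolia; lia.
  + have : 2 * ka + kb - 1 + m < 2 * n by tolia; lia.
    by case/modn_small2 => [[? ->]|[? ->]]; tolia; lia.
- apply: (hit_contra (X := o + 2 * ka + 2 * kb + kc - 1 + m) (Y := 2 * ka + 2 * kb + kc - 1 + m) hu hpu bC eB); rewrite ?r2.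
  + tolia; lia.
  + tolia; lia.
  + have : 2 * ka + 2 * kb + kc - 1 + m < 2 * n by tolia; lia.
    by case/modn_small2 => [[? ->]|[? ->]]; tolia; lia.
  + have : 2 * ka + 2 * kb + kc - 1 + m < 2 * n by tolia; lia.
    by case/modn_small2 => [[? ->]|[? ->]]; tolia; lia.
Qed.

End Blk.

Theorem lemma3p3 (m : nat) (B : {set {set 'I_(2 * m)}}) :
  (2 <= m)%N -> is_blocker B ->
  exists s : 'I_(2 * m),
    forall i : 'I_(2 * m), bnd_edge i \in B ->
      exists2 k : nat, (k < m)%N & val i = (val s + k) %% (2 * m).
Proof.
move=> m2 HB.
have nn := npos m2.
have m2l : (2 <= m)%coq_nat by apply/leP.
pose dd (s i : 'I_(2 * m)) := (i + (2 * m - s)) %% (2 * m).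
have dd_lt (s i : 'I_(2 * m)) : dd s i < 2 * m by rewrite ltn_pmod.
have dd_eq (s i : 'I_(2 * m)) : (s + dd s i) %% (2 * m) = i.
  have hs := ltn_ord s; have hi := ltn_ord i.
  rewrite /dd modnDmr.
  have -> : s + (i + (2 * m - s)) = i + 2 * m by tolia; lia.
  by rewrite modnDr modn_small.
have dd_char (s i : 'I_(2 * m)) k : k < 2 * m -> (s + k) %% (2 * m) = i -> dd s i = k.
  move=> hk hi; have hs := ltn_ord s.
  rewrite /dd -hi modnDml.
  have -> : s + k + (2 * m - s) = k + 2 * m by tolia; lia.
  by rewrite modnDr modn_small.
have bnd_dd (s i : 'I_(2 * m)) : bnd_edge i = bnd m2 (s + dd s i).
  by rewrite bnd_edgeE; apply: bnd_mod; rewrite dd_eq modn_small.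
have ne_m (s i : 'I_(2 * m)) : bnd_edge s \in B -> bnd_edge i \in B -> dd s i <> m.
  move=> h1 h2 e; apply: (no_antipode HB (x := s)).
    by rewrite -bnd_edgeE.
  by move: h2; rewrite (bnd_dd s i) e.
case: (boolP [exists s, [forall i, (bnd_edge i \in B) ==> (dd s i < m)]]).
  case/existsP => s /forallP H; exists s => i hi.
  exists (dd s i); first by move: (H i); rewrite hi.
  by rewrite dd_eq.
move=> Hn; exfalso.
have fail (s : 'I_(2 * m)) : exists2 i, bnd_edge i \in B & m <= dd s i.
  move: Hn; rewrite negb_exists => /forallP /(_ s).
  rewrite negb_forall => /existsP [i]; rewrite negb_imply => /andP [hi].
  by rewrite -leqNgt => h; exists i.
have [a aB _] := fail (vtx m2 0).
have [x xB hx] := fail a.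
have hx' : m < dd a x.
  have := ne_m a x aB xB; rewrite ltn_neqAle hx andbT => h; apply/eqP => e; by apply: h.
pose P := fun i => (bnd_edge i \in B) && (m < dd a i).
have Px : P x by rewrite /P xB hx'.
case: (arg_minnP (dd a) Px) => c /andP [cB hc] cmin.
have [b bB hb] := fail c.
have hbm := ne_m c b cB bB.
have pm := ne_m a b aB bB.
have hp := dd_lt a b; have hq := dd_lt a c.
have ecb : dd c b = (dd a b + 2 * m - dd a c) %% (2 * m).
  apply: dd_char; first by rewrite ltn_pmod.
  rewrite modnDmr -(dd_eq a c) modnDml.
  have -> : a + dd a c + (dd a b + 2 * m - dd a c) = a + dd a b + 2 * m by tolia; lia.
  by rewrite modnDr dd_eq.
have minb : m < dd a b -> dd a c <= dd a b.
  by move=> h; apply: cmin; rewrite /P bB h.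
have hr : dd a b + 2 * m - dd a c < 2 * (2 * m) by tolia; lia.
have key : (0 < dd a b)%coq_nat /\ (dd a b < m)%coq_nat /\ (m < dd a c)%coq_nat /\
           (dd a c < dd a b + m)%coq_nat.
  case: (modn_small2 hr) => [[r1 r2]|[r1 r2]]; rewrite r2 in ecb; rewrite ecb in hb hbm;
  case: (ltnP m (dd a b)) => h; try (have := minb h => h');
  tolia; lia.
move: key; set p := dd a b; set q := dd a c => key.
have ha := ltn_ord a.
apply: (core3 HB (ka := m - (q - p)) (kb := q - m) (kc := m - p) (o := a + q - p + 1)).
- tolia; lia.
- tolia; lia.
- tolia; lia.
- tolia; lia.
- rewrite (@bnd_mod m m2 _ a); first by rewrite -bnd_edgeE.
  have -> : a + q - p + 1 + (m - (q - p)) - 1 + m = a + 2 * m by tolia; lia.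
  by rewrite modnDr.
- rewrite (@bnd_mod m m2 _ (a + p)); first by rewrite -bnd_dd.
  have -> : a + q - p + 1 + 2 * (m - (q - p)) + (q - m) - 1 + m = a + p + 2 * m by tolia; lia.
  by rewrite modnDr.
- rewrite (@bnd_mod m m2 _ (a + q)); first by rewrite -bnd_dd.
  have -> : a + q - p + 1 + 2 * (m - (q - p)) + 2 * (q - m) + (m - p) - 1 + m = a + q + 2 * m by tolia; lia.
  by rewrite modnDr.
Qed.
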